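(* Let $n$ be an integer and $r>0$. Then the function $F(\eta)=\eta^{2}\frac{I_n'(\eta^{-1}r)}{I_n(\eta^{-1}r)}$ is strictly monotonically increasing in $\eta\in(0,\infty)$.
   Context: $I_n$ denotes the modified Bessel function of the first kind of order $n$ (with $I_{-n}=I_n$ for integer $n$). *)

(* Defs.v *)
From Stdlib Require Import Reals ZArith.
From Coquelicot Require Import Coquelicot.
Open Scope R_scope.

(* Modified Bessel function of the first kind of integer order n:
   I_n(x) = sum_{k>=0} (x/2)^(2k+|n|) / (k! (k+|n|)!),
   which gives I_{-n} = I_n for integer n. *)
Definition besselI (n : Z) (x : R) : R :=
  Series (fun k : nat =>
    (x / 2) ^ (2 * k + Z.abs_nat n) / (INR (fact k) * INR (fact (k + Z.abs_nat n)))).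

Definition besselI' (n : Z) (x : R) : R := Derive (besselI n) x.

Definition F_eta (n : Z) (r eta : R) : R :=
  eta ^ 2 * (besselI' n (/ eta * r) / besselI n (/ eta * r)).

(* Main.v *)
Require Import Defs.
From Stdlib Require Import Reals ZArith Lra Lia Psatz.
From Coquelicot Require Import Coquelicot.
Open Scope R_scope.

Definition P (f : nat -> R) (t : R) (N : nat) : R := sum_n (fun k => f k * t ^ k) N.

Lemma P_S f t N : P f t (S N) = P f t N + f (S N) * t ^ (S N).
Proof. unfold P. rewrite sum_Sn. reflexivity. Qed.

Lemma P_O f t : P f t 0 = f 0%nat.
Proof. unfold P. rewrite sum_O. simpl. ring. Qed.

Lemma pseries_lim f t l : is_pseries f t l -> is_lim_seq (P f t) l.
Proof.
  intro H. unfold P.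
  apply (is_lim_seq_ext (sum_n (fun k => scal (pow_n t k) (f k)))).
  - intro N. apply sum_n_ext. intro k. rewrite pow_n_pow. unfold scal; simpl.
    unfold mult; simpl. ring.
  - exact H.
Qed.

Lemma lin_id (al be : nat -> R) (a b W Y y w : R) N :
  sum_n (fun j => (b * al j - a * be j) * (W * y ^ j - Y * w ^ j)) N =
  b*W*P al y N - b*Y*P al w N - a*W*P be y N + a*Y*P be w N.
Proof.
  induction N.
  - rewrite sum_O, !P_O. simpl. ring.
  - rewrite sum_Sn, !P_S, IHN. unfold plus; simpl. ring.
Qed.

Lemma sum_nonneg (f : nat -> R) N : (forall j, (j <= N)%nat -> 0 <= f j) -> 0 <= sum_n f N.
Proof.
  induction N; intro H.
  - rewrite sum_O. apply H. lia.
  - rewrite sum_Sn. unfold plus; simpl.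
    assert (0 <= f (S N)) by (apply H; lia).
    assert (0 <= sum_n f N) by (apply IHN; intros; apply H; lia). lra.
Qed.

Lemma powdiff y w j k : 0 <= y -> y <= w -> (j <= k)%nat -> y ^ j * w ^ k - y ^ k * w ^ j >= 0.
Proof.
  intros Hy Hyw Hjk.
  replace k with (j + (k - j))%nat by lia. rewrite !pow_add.
  assert (0 <= y ^ j) by (apply pow_le; lra).
  assert (0 <= w ^ j) by (apply pow_le; lra).
  assert (y ^ (k - j) <= w ^ (k - j)) by (apply pow_incr; lra).
  assert (0 <= y^j * w^j) by (apply Rmult_le_pos; auto).
  nra.
Qed.

Lemma ratio_lemma (be rho : nat -> R) (y w Ay Aw By Bw : R) :
  (forall k, 0 < be k) ->
  (forall j k, (j <= k)%nat -> rho k <= rho j) ->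
  rho 1%nat < rho 0%nat ->
  0 <= y -> y < w ->
  is_pseries (fun k => rho k * be k) y Ay ->
  is_pseries (fun k => rho k * be k) w Aw ->
  is_pseries be y By -> is_pseries be w Bw ->
  Ay * Bw - Aw * By > 0.
Proof.
  intros Hbe Hrho Hr01 Hy Hyw HAy HAw HBy HBw.
  set (al := fun k => rho k * be k).
  set (D := fun N => P al y N * P be w N - P al w N * P be y N).
  assert (HD : forall N, D (S N) >= D N).
  { intro N. unfold D. rewrite !P_S.
    pose proof (lin_id al be (al (S N)) (be (S N)) (w ^ S N) (y ^ S N) y w N) as L.
    assert (0 <= sum_n (fun j => (be (S N) * al j - al (S N) * be j) *
        (w ^ S N * y ^ j - y ^ S N * w ^ j)) N).
    { apply sum_nonneg. intros j Hj. unfold al.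
      apply Rmult_le_pos.
      - assert (rho (S N) <= rho j) by (apply Hrho; lia).
        pose proof (Hbe j); pose proof (Hbe (S N)).
        assert (0 <= be (S N) * be j) by nra.
        assert (0 <= (be (S N) * be j) * (rho j - rho (S N))) by nra. nra.
      - assert (Hj' : (j <= S N)%nat) by lia.
        pose proof (powdiff y w j (S N) Hy (Rlt_le _ _ Hyw) Hj'). lra. }
    rewrite L in H. nra. }
  assert (HD1 : forall N, D (S N) >= D 1%nat).
  { induction N. lra. specialize (HD (S N)). lra. }
  assert (HD1pos : D 1%nat > 0).
  { unfold D. rewrite !P_S, !P_O. unfold al. simpl.
    pose proof (Hbe 0%nat); pose proof (Hbe 1%nat).
    assert (0 < be 0%nat * be 1%nat) by nra.
    assert (0 < (rho 0%nat - rho 1%nat) * (be 0%nat * be 1%nat)) by nra.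
    nra. }
  assert (Hlim : is_lim_seq (fun N => D (S N)) (Ay * Bw - Aw * By)).
  { apply -> (is_lim_seq_incr_1 D). unfold D.
    apply is_lim_seq_minus'; apply is_lim_seq_mult'; apply pseries_lim; assumption. }
  pose proof (is_lim_seq_le (fun _ => D 1%nat) (fun N => D (S N)) (D 1%nat) (Ay*Bw - Aw*By)
     ltac:(intro N; specialize (HD1 N); lra) (is_lim_seq_const _) Hlim) as Hle.
  simpl in Hle. lra.
Qed.

Lemma pseries_pos (be : nat -> R) y B :
  (forall k, 0 < be k) -> 0 <= y -> is_pseries be y B -> 0 < B.
Proof.
  intros Hbe Hy HB.
  assert (forall N, be 0%nat <= P be y N).
  { induction N. rewrite P_O; lra. rewrite P_S.
    pose proof (Hbe (S N)). assert (0 <= y ^ S N) by (apply pow_le; lra). nra. }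
  pose proof (is_lim_seq_le (fun _ => be 0%nat) (P be y) (be 0%nat) B H
     (is_lim_seq_const _) (pseries_lim _ _ _ HB)) as Hle.
  simpl in Hle. pose proof (Hbe 0%nat). lra.
Qed.

Definition ca (m : nat) (k : nat) : R := / (INR (fact k) * INR (fact (k + m))).

Lemma fact_pos k : 0 < INR (fact k).
Proof. apply lt_0_INR. apply lt_O_fact. Qed.

Lemma ca_pos m k : 0 < ca m k.
Proof. unfold ca. apply Rinv_0_lt_compat. apply Rmult_lt_0_compat; apply fact_pos. Qed.

Lemma ca_ratio m n : ca m (S n) / ca m n = / (INR (S n) * INR (S n + m)).
Proof.
  unfold ca. replace (S n + m)%nat with (S (n + m)) by lia.
  rewrite !fact_simpl, !mult_INR.
  pose proof (fact_pos n); pose proof (fact_pos (n+m)).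
  assert (0 < INR (S n)) by (apply lt_0_INR; lia).
  assert (0 < INR (S (n+m))) by (apply lt_0_INR; lia).
  field. repeat split; lra.
Qed.

Lemma ca_radius m : CV_radius (ca m) = p_infty.
Proof.
  apply CV_radius_infinite_DAlembert.
  - intro n. pose proof (ca_pos m n). lra.
  - apply (is_lim_seq_le_le (fun _ => 0) _ (fun n => / INR (S n))).
    + intro n. rewrite ca_ratio.
      assert (0 < INR (S n)) by (apply lt_0_INR; lia).
      assert (1 <= INR (S n + m)) by (apply (le_INR 1); lia).
      rewrite Rabs_pos_eq.
      * split. apply Rlt_le, Rinv_0_lt_compat; nra.
        apply Rinv_le_contravar; nra.
      * apply Rlt_le, Rinv_0_lt_compat; nra.
    + apply is_lim_seq_const.
    + apply -> (is_lim_seq_incr_1 (fun n => / INR n)).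
      replace (Finite 0) with (Rbar_inv p_infty) by reflexivity.
      apply is_lim_seq_inv. apply is_lim_seq_INR. discriminate.
Qed.

Lemma I_eq n x : besselI n x = (x/2) ^ (Z.abs_nat n) * PSeries (ca (Z.abs_nat n)) ((x/2)^2).
Proof.
  unfold besselI, PSeries. rewrite <- Series_scal_l. apply Series_ext. intro k.
  unfold ca. rewrite pow_add, pow_mult. unfold Rdiv. ring.
Qed.

Lemma I_derive n x :
  Derive (besselI n) x = INR (Z.abs_nat n) * / 2 * (x/2) ^ pred (Z.abs_nat n) * PSeries (ca (Z.abs_nat n)) ((x/2)^2)
     + (x/2) ^ (Z.abs_nat n) * ((x/2) * PSeries (PS_derive (ca (Z.abs_nat n))) ((x/2)^2)).
Proof.
  set (m := Z.abs_nat n).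
  rewrite (Derive_ext _ (fun t => (t/2) ^ m * PSeries (ca m) ((t/2)^2))) by (intro; apply I_eq).
  apply is_derive_unique.
  assert (Hd : is_derive (fun t : R => t / 2) x (/2)).
  { auto_derive; auto. field. }
  assert (H1 : is_derive (fun t => (t/2)^m) x (INR m * / 2 * (x/2) ^ pred m)).
  { exact (is_derive_pow (fun t => t/2) m x (/2) Hd). }
  assert (H2 : is_derive (fun t => PSeries (ca m) ((t/2)^2)) x ((x/2) * PSeries (PS_derive (ca m)) ((x/2)^2))).
  { assert (H3 : is_derive (fun t => (t/2)^2) x (INR 2 * /2 * (x/2)^ pred 2)) by exact (is_derive_pow (fun t => t/2) 2 x (/2) Hd).
    assert (H4 : is_derive (PSeries (ca m)) ((x/2)^2) (PSeries (PS_derive (ca m)) ((x/2)^2))).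
    { apply is_derive_PSeries. rewrite ca_radius. exact I. }
    pose proof (is_derive_comp _ _ _ _ _ H4 H3) as H5.
    replace ((x/2) * PSeries (PS_derive (ca m)) ((x/2)^2)) with
      (scal (INR 2 * /2 * (x/2)^ pred 2) (PSeries (PS_derive (ca m)) ((x/2)^2))).
    exact H5. unfold scal; simpl; unfold mult; simpl. field. }
  pose proof (is_derive_mult _ _ _ _ _ H1 H2 ltac:(intros; apply Rmult_comm)) as H.
  exact H.
Qed.

Lemma pred_pow m x : x <> 0 -> INR m * / 2 * (x/2) ^ pred m = INR m / x * (x/2) ^ m.
Proof.
  intro Hx. destruct m. rewrite INR_0. unfold Rdiv. ring.
  simpl pred. rewrite <- tech_pow_Rmult. field. auto.
Qed.

Definition Tq m y := PSeries (PS_derive (ca m)) y / PSeries (ca m) y.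

Lemma T_pos m y : 0 <= y -> 0 < PSeries (ca m) y.
Proof.
  intro Hy. apply (pseries_pos (ca m) y). apply ca_pos. auto.
  apply PSeries_correct. apply CV_radius_inside. rewrite ca_radius. exact I.
Qed.

Lemma rho_eq m k : PS_derive (ca m) k = / INR (k + m + 1) * ca m k.
Proof.
  unfold PS_derive, ca. replace (S k + m)%nat with (S (k + m)) by lia.
  replace (k + m + 1)%nat with (S (k + m)) by lia.
  rewrite !fact_simpl, !mult_INR.
  pose proof (fact_pos k); pose proof (fact_pos (k+m)).
  assert (0 < INR (S k)) by (apply lt_0_INR; lia).
  assert (0 < INR (S (k+m))) by (apply lt_0_INR; lia).
  field. repeat split; lra.
Qed.

Lemma Tq_decr m y w : 0 <= y -> y < w -> Tq m w < Tq m y /\ 0 <= Tq m w.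
Proof.
  intros Hy Hyw.
  set (rho := fun k => / INR (k + m + 1)).
  assert (Hex : forall t, is_pseries (ca m) t (PSeries (ca m) t)).
  { intro t. apply PSeries_correct. apply CV_radius_inside. rewrite ca_radius. exact I. }
  assert (Hex' : forall t, is_pseries (fun k => rho k * ca m k) t (PSeries (PS_derive (ca m)) t)).
  { intro t. rewrite (PSeries_ext _ (fun k => rho k * ca m k)) by (intro; apply rho_eq).
    apply PSeries_correct. apply CV_radius_inside.
    rewrite <- (CV_radius_ext (PS_derive (ca m))) by (intro; apply rho_eq).
    rewrite CV_radius_derive, ca_radius. exact I. }
  pose proof (ratio_lemma (ca m) rho y w _ _ _ _ (ca_pos m)
    ltac:(intros j k Hjk; unfold rho; apply Rinv_le_contravar;
          [apply lt_0_INR; lia | apply le_INR; lia])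
    ltac:(unfold rho; apply Rinv_lt_contravar;
          [apply Rmult_lt_0_compat; apply lt_0_INR; lia | apply lt_INR; lia])
    Hy Hyw (Hex' y) (Hex' w) (Hex y) (Hex w)) as H.
  pose proof (T_pos m y Hy); pose proof (T_pos m w ltac:(lra)).
  assert (0 <= PSeries (PS_derive (ca m)) w).
  { apply Rlt_le. apply (pseries_pos (fun k => rho k * ca m k) w).
    intro k. unfold rho. apply Rmult_lt_0_compat. apply Rinv_0_lt_compat, lt_0_INR; lia. apply ca_pos.
    lra. apply Hex'. }
  unfold Tq. split.
  - apply (Rmult_lt_reg_r (PSeries (ca m) y * PSeries (ca m) w)). nra.
    field_simplify; try lra. 
  - apply Rmult_le_pos; auto. apply Rlt_le, Rinv_0_lt_compat; auto.
Qed.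

Lemma F_formula n r eta : 0 < r -> 0 < eta ->
  F_eta n r eta = INR (Z.abs_nat n) * eta ^ 3 / r + (eta * r / 2) * Tq (Z.abs_nat n) ((/ eta * r / 2) ^ 2).
Proof.
  intros Hr He. unfold F_eta, besselI'. rewrite I_derive, I_eq.
  set (m := Z.abs_nat n).
  assert (Hx : / eta * r <> 0).
  { apply Rgt_not_eq. apply Rmult_lt_0_compat; auto. apply Rinv_0_lt_compat; auto. }
  rewrite pred_pow by exact Hx.
  pose proof (T_pos m ((/ eta * r / 2) ^ 2) ltac:(apply pow2_ge_0)).
  assert ((/ eta * r / 2) ^ m <> 0) by (apply pow_nonzero; lra).
  unfold Tq. field. repeat split; lra.
Qed.

Theorem corollary2p1 (n : Z) (r : R) (hr : 0 < r) :
  forall eta1 eta2 : R, 0 < eta1 -> eta1 < eta2 -> F_eta n r eta1 < F_eta n r eta2.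
Proof.
  intros e1 e2 H1 H12.
  rewrite !F_formula by lra.
  set (m := Z.abs_nat n).
  assert (Hy : (/ e2 * r / 2) ^ 2 < (/ e1 * r / 2) ^ 2).
  { assert (0 < / e2 * r / 2).
    { apply Rmult_lt_0_compat; [apply Rmult_lt_0_compat; [apply Rinv_0_lt_compat; lra | lra] | lra]. }
    assert (/ e2 < / e1) by (apply Rinv_lt_contravar; nra).
    assert (/ e2 * r / 2 < / e1 * r / 2).
    { unfold Rdiv. apply Rmult_lt_compat_r. lra. apply Rmult_lt_compat_r; lra. }
    simpl. nra. }
  destruct (Tq_decr m _ _ (pow2_ge_0 _) Hy) as [Hq Hq0].
  assert (INR m * e1 ^ 3 / r <= INR m * e2 ^ 3 / r).
  { unfold Rdiv. apply Rmult_le_compat_r. left; apply Rinv_0_lt_compat; lra.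
    apply Rmult_le_compat_l. apply pos_INR. apply pow_incr; lra. }
  set (q1 := Tq m ((/ e1 * r / 2) ^ 2)) in *.
  set (q2 := Tq m ((/ e2 * r / 2) ^ 2)) in *.
  assert (e1 * r / 2 * q1 <= e1 * r / 2 * q2).
  { apply Rmult_le_compat_l. nra. lra. }
  assert (e1 * r / 2 * q2 < e2 * r / 2 * q2).
  { apply Rmult_lt_compat_r. lra. nra. }
  lra.
Qed.
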